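(* Let $X$ be a strictly systolic angled complex, let $v$ be a vertex of $X$ and let $\sigma$ be a simple cycle in $\mathrm{lk}(v)$. Then either the angular length $\sum_{c\in\sigma} w(c)$ of $\sigma$ is $\geq 2\pi$, or $\sigma$ is the boundary of a triangulated disk without interior vertices all of whose edges are edges of $\mathrm{lk}(v)$.
   Context: A quasi-simplicial complex is a simplicial complex in which multiple edges between two vertices are allowed, but loops are not allowed and no two distinct edges of a 2-simplex coincide (no 2-simplex has two or more edges in common with another in the sense that a 2-simplex's boundary edges are distinct); complexes are locally finite. It is 3-flag if whenever it contains three faces of a tetrahedron (3-simplex) it contains the whole tetrahedron. For a vertex $v$, $\mathrm{lk}(v)$ denotes the geometric link of $v$ in the 2-skeleton $X^{(2)}$: a graph whose vertices correspond to edges of $X$ at $v$ and whose edges correspond to corners (at $v$) of 2-simplices containing $v$. An angled complex is such an $X$ together with a weight function $w$ assigning a nonnegative real number to each corner of each 2-simplex (equivalently, to each edge of each vertex link), with finite image, satisfying the weak triangle inequality: for every vertex $v$ and vertices $v_1,v_2,v_3$ of $\mathrm{lk}(v)$ joined by edges $\alpha_{12},\alpha_{23},\alpha_{13}$ of $\mathrm{lk}(v)$ ($\alpha_{ij}$ from $v_i$ to $v_j$), $w(\alpha_{13})\le w(\alpha_{12})+w(\alpha_{23})$. The angular length of a path in a vertex link is the sum of the weights of its edges. A simple cycle of length greater than 3 in $\mathrm{lk}(v)$ is 2-full if no edge of $\mathrm{lk}(v)$ connects two vertices of the cycle having a common neighbour in the cycle. $X$ is locally $2\pi$-large if every 2-full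 cycle in every vertex link has angular length $\geq 2\pi$. A strictly systolic angled complex is a simply connected, locally $2\pi$-large, 3-flag angled quasi-simplicial complex in which the sum of the three weights of each 2-simplex is strictly less than $\pi$. *)

(* Defs.v *)
From mathcomp Require Import all_boot all_order all_algebra.
From mathcomp Require Import reals trigo.
From Stdlib Require Import Relations.

Set Implicit Arguments.
Unset Strict Implicit.
Unset Printing Implicit Defensive.

Import Order.TTheory GRing.Theory Num.Theory.
Local Open Scope ring_scope.

(* A (3-skeleton of a) quasi-simplicial complex, given combinatorially.       *)
(*  - tedges f i    : the edge of f opposite to its vertex tverts f i         *)
(*  - qfaces t i    : the face (2-simplex) of t opposite to qverts t i        *)
(* Multiple edges between two vertices (and multiple simplices on the same    *)
(* vertices) are allowed; each closed simplex is embedded.                    *)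
Record complex3 := Complex3 {
  vert : Type; edge : Type; tri : Type; tet : Type;
  ends : edge -> 'I_2 -> vert;
  tverts : tri -> 'I_3 -> vert;
  tedges : tri -> 'I_3 -> edge;
  qverts : tet -> 'I_4 -> vert;
  qfaces : tet -> 'I_4 -> tri }.

Section Defs.
Variable X : complex3.

Definition incident (e : edge X) (u : vert X) : Prop := exists a, ends e a = u.

Definition is_qscomplex : Prop :=
  [/\
      forall e : edge X, ends e ord0 <> ends e ord_max,
      forall f : tri X, injective (tverts f),
      forall (f : tri X) (i : 'I_3) (a : 'I_2),
        exists2 j, j != i & ends (tedges f i) a = tverts f j,
      forall (f : tri X) (i j : 'I_3), j != i -> incident (tedges f i) (tverts f j)
    & [/\
      forall t : tet X, injective (qverts t),
      forall (t : tet X) (i : 'I_4) (k : 'I_3),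
        exists2 j, j != i & tverts (qfaces t i) k = qverts t j
    &
      forall (t : tet X) (i i' : 'I_4), i != i' ->
        exists a b, tedges (qfaces t i) a = tedges (qfaces t i') b]].

Definition finitely_many (T : Type) (P : T -> Prop) : Prop :=
  exists n (g : nat -> T), forall x, P x -> exists2 k, (k < n)%N & g k = x.

Definition locally_finite : Prop :=
  forall u : vert X,
  [/\ finitely_many (fun e : edge X => incident e u),
      finitely_many (fun f : tri X => exists i, tverts f i = u)
    & finitely_many (fun t : tet X => exists i, qverts t i = u)].

Definition has_edge (f : tri X) (e : edge X) : Prop := exists i, tedges f i = e.

Definition three_flag : Prop :=
  forall (u : vert X) (e1 e2 e3 : edge X) (f1 f2 f3 : tri X),
    incident e1 u -> incident e2 u -> incident e3 u ->
    e1 <> e2 -> e2 <> e3 -> e1 <> e3 ->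
    has_edge f1 e1 -> has_edge f1 e2 ->
    has_edge f2 e2 -> has_edge f2 e3 ->
    has_edge f3 e3 -> has_edge f3 e1 ->
    exists t : tet X, exists i1 i2 i3,
      [/\ qfaces t i1 = f1, qfaces t i2 = f2 & qfaces t i3 = f3].

Definition odge := (edge X * bool)%type. (* oriented edge; true = reversed *)
Definition osrc (d : odge) : vert X := if d.2 then ends d.1 ord_max else ends d.1 ord0.
Definition otgt (d : odge) : vert X := if d.2 then ends d.1 ord0 else ends d.1 ord_max.
Definition oflip (d : odge) : odge := (d.1, ~~ d.2).

Fixpoint is_walk (v : vert X) (p : seq odge) : Prop :=
  match p with
  | [::] => True
  | d :: p' => osrc d = v /\ is_walk (otgt d) p'
  end.

Definition walk_end (v : vert X) (p : seq odge) : vert X := foldl (fun _ d => otgt d) v p.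

Definition null_loop (l : seq odge) : Prop :=
  (exists d, l = [:: d; oflip d]) \/
  (exists d1 d2 d3 (f : tri X) (i j k : 'I_3),
     [/\ l = [:: d1; d2; d3], [/\ i != j, j != k & i != k],
         [/\ d1.1 = tedges f i, d2.1 = tedges f j & d3.1 = tedges f k],
         is_walk (osrc d1) l & walk_end (osrc d1) l = osrc d1]).

(* elementary move on walks starting at v: delete a null loop based at the
   current point (its inverse, insertion, is provided by the symmetric closure) *)
Definition htpy_move (v : vert X) (p q : seq odge) : Prop :=
  exists a l b, [/\ p = a ++ l ++ b, q = a ++ b, null_loop l
                  & is_walk (walk_end v a) l].

Definition simply_connected : Prop :=
  (forall u u' : vert X, exists p, is_walk u p /\ walk_end u p = u') /\
  (forall (v : vert X) (p : seq odge), is_walk v p -> walk_end v p = v ->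
     clos_refl_sym_trans _ (htpy_move v) p [::]).

(* Vertices of lk(u): edges e with incident e u.  Edges of lk(u): corners      *)
(* c = (f, i) with tverts f i = u; such a corner joins the two edges of f      *)
(* incident to u, i.e. the edges tedges f j, j != i.                           *)
Definition corner := (tri X * 'I_3)%type.

Definition lk_joins (u : vert X) (c : corner) (e e' : edge X) : Prop :=
  tverts c.1 c.2 = u /\
  exists j k : 'I_3, [/\ j != c.2, k != c.2, j != k,
                         tedges c.1 j = e & tedges c.1 k = e'].

Variable R : realType.
Variable w : tri X -> 'I_3 -> R.

Definition wt (c : corner) : R := w c.1 c.2.

Definition angled : Prop :=
  [/\ forall f i, 0 <= w f i,
      exists n (g : nat -> R), forall f i, exists2 k, (k < n)%N & w f i = g k
    &
      forall (u : vert X) (e1 e2 e3 : edge X) (c12 c23 c13 : corner),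
        lk_joins u c12 e1 e2 -> lk_joins u c23 e2 e3 -> lk_joins u c13 e1 e3 ->
        wt c13 <= wt c12 + wt c23].

Definition lk_cycle (u : vert X) (n : nat) (x : nat -> edge X) (c : nat -> corner) : Prop :=
  [/\ (3 <= n)%N,
      forall k l, (k < n)%N -> (l < n)%N -> x k = x l -> k = l
    & forall k, (k < n)%N -> lk_joins u (c k) (x k) (x (k.+1 %% n)%N)].

Definition ang_length (n : nat) (c : nat -> corner) : R := \sum_(k < n) wt (c k).

Definition two_full (u : vert X) (n : nat) (x : nat -> edge X) (c : nat -> corner) : Prop :=
  [/\ lk_cycle u n x c, (3 < n)%N &
      forall k, (k < n)%N -> forall c' : corner, ~ lk_joins u c' (x k) (x (k.+2 %% n)%N)].

Definition locally_2pi_large : Prop :=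
  forall u n x c, two_full u n x c -> 2 * pi <= ang_length n c.

Definition strict_triangles : Prop :=
  forall f : tri X, w f ord0 + w f (inord 1) + w f ord_max < pi.

Definition strictly_systolic : Prop :=
  [/\ is_qscomplex, locally_finite, three_flag & simply_connected] /\
  [/\ angled, locally_2pi_large & strict_triangles].

End Defs.

(* Triangulations of a convex polygon with vertices i, i+1, ..., j (closed by the
   side {i,j}), using only diagonals satisfying D: the side {i,j} lies in a unique
   triangle {i,k,j}, and the two sub-polygons are triangulated recursively. *)
Inductive poly_tri (D : nat -> nat -> Prop) : nat -> nat -> Prop :=
| PT_side i : poly_tri D i i.+1
| PT_split i k j : (i < k)%N -> (k < j)%N ->
    (k = i.+1 \/ D i k) -> (j = k.+1 \/ D k j) ->
    poly_tri D i k -> poly_tri D k j -> poly_tri D i j.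

Definition bounds_lk_disk (X : complex3) (u : vert X) (n : nat) (x : nat -> edge X) : Prop :=
  poly_tri (fun i j => exists c, lk_joins u c (x i) (x j)) 0 n.-1.

(* Main.v *)
Require Import Defs.
From mathcomp Require Import all_boot all_order all_algebra.
From mathcomp Require Import reals trigo.
From mathcomp Require Import zify lra.
From Stdlib Require Import Classical.
Import Order.TTheory GRing.Theory Num.Theory.
Local Open Scope ring_scope.

Lemma poly_tri_map (D D' : nat -> nat -> Prop) (g : nat -> nat)
  (HD : forall a b, D' a b -> D (g a) (g b))
  (Hm : forall a b, (a < b)%N -> (g a < g b)%N) i j :
  poly_tri D' i j ->
  (forall a, (i <= a < j)%N -> g a.+1 = (g a).+1 \/ (g a.+1 = (g a).+2 /\ D (g a) (g a).+2)) ->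
  poly_tri D (g i) (g j).
Proof.
elim=> {i j} [i|i k j hik hkj Hl Hr P1 IH1 P2 IH2] Hs.
- have := Hs i; rewrite leqnn ltnSn => /(_ isT) [->|[-> hD]]; first exact: PT_side.
  apply: (@PT_split _ _ (g i).+1) => //; [by left|by left|exact: PT_side|exact: PT_side].
- apply: (@PT_split _ _ (g k)); [exact: Hm|exact: Hm| | | | ].
  + case: Hl => [Ek|]; last by move/HD; right.
    have := Hs i; rewrite leqnn (ltn_trans hik hkj) => /(_ isT) [|[]]; rewrite -Ek; first by left.
    by move=> ->; right.
  + case: Hr => [Ek|]; last by move/HD; right.
    have := Hs k; rewrite hkj (ltnW hik) => /(_ isT) [|[]]; rewrite -Ek; first by left.
    by move=> ->; right.
  + apply: IH1 => a /andP [h1 h2]; apply: Hs; apply/andP; split => //; exact: ltn_trans hkj.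
  + apply: IH2 => a /andP [h1 h2]; apply: Hs; apply/andP; split => //; exact: leq_trans (ltnW hik) h1.
Qed.

Lemma joins_sym (X : complex3) (u : vert X) c e e' : lk_joins u c e e' -> lk_joins u c e' e.
Proof.
case=> H [j [k [h1 h2 h3 h4 h5]]]; split=> //; exists k, j; split => //; by rewrite eq_sym.
Qed.

Lemma main_ind (R : realType) (X : complex3) (w : tri X -> 'I_3 -> R) (v : vert X)
  (Htri : forall e1 e2 e3 c12 c23 c13, lk_joins v c12 e1 e2 -> lk_joins v c23 e2 e3 ->
     lk_joins v c13 e1 e3 -> wt w c13 <= wt w c12 + wt w c23)
  (Hlarge : forall n x c, two_full v n x c -> 2 * pi <= ang_length w n c) :
  forall n x c, lk_cycle v n x c -> 2 * pi <= ang_length w n c \/ bounds_lk_disk v n x.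
Proof.
elim=> [|n IH] x c; rewrite /lk_cycle => -[h3 hinj hj]; first by [].
have [En|Nn] := eqVneq n 2.
  right; rewrite /bounds_lk_disk En /=.
  apply: (@PT_split _ 0 1 2) => //; [by left|by left|exact: PT_side|exact: PT_side].
have h3n : (3 <= n)%N by lia.
have [Hfull|Hnf] := classic (forall k, (k < n.+1)%N -> forall c',
   ~ lk_joins v c' (x k) (x (k.+2 %% n.+1)%N)).
  by left; apply: (Hlarge n.+1 x c); split; [by split|lia|exact: Hfull].
have [k hk] := not_all_ex_not _ _ Hnf.
have [hkn hk'] := imply_to_and _ _ hk.
have [d hd'] := not_all_ex_not _ _ hk'.
have hd := NNPP _ hd'.
clear Hnf hk hk' hd'.
have [klt|kge] := ltnP k n.
- (* remove vertex k+1 *)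
  pose g i := if (i <= k)%N then i else i.+1.
  pose x' i := x (g i).
  pose c' i := if (i < k)%N then c i else if i == k then d else c i.+1.
  have Hc : lk_cycle v n x' c'.
    split => //.
      move=> a b ha hb; rewrite /x' => E.
      have := hinj _ _ _ _ E; rewrite /g.
      by case: ifP => h1; case: ifP => h2; lia.
    move=> i hi; rewrite /c' /x'.
    have [ilt|ige] := ltnP i k.
      have E1 : g i = i by rewrite /g; case: ifP => h; lia.
      have E2 : g (i.+1 %% n)%N = (i.+1 %% n.+1)%N.
        by rewrite !modn_small /g; try case: ifP => h; lia.
      by rewrite E1 E2; apply: hj; lia.
    have [Eik|Nik] := eqVneq i k.
      subst i.
      have E1 : g k = k by rewrite /g leqnn.
      have E2 : g (k.+1 %% n)%N = (k.+2 %% n.+1)%N.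
        have [kl|ke] := ltnP k.+1 n.
          by rewrite !modn_small /g; try case: ifP => h; lia.
        have -> : k.+1 = n by lia.
        by rewrite !modnn /g /=.
      by rewrite E1 E2.
    rewrite ?(negbTE Nik).
    have E1 : g i = i.+1 by rewrite /g; case: ifP => h; lia.
    have E2 : g (i.+1 %% n)%N = (i.+2 %% n.+1)%N.
      have [kl|ke] := ltnP i.+1 n.
        by rewrite !modn_small /g; try case: ifP => h; lia.
      have -> : i.+1 = n by lia.
      by rewrite modnn /g /= modnn.
    by rewrite E1 E2; apply: hj; lia.
  have Hk1 : (k.+1 %% n.+1)%N = k.+1 by rewrite modn_small; lia.
  have Hw : wt w d <= wt w (c k) + wt w (c k.+1).
    apply: (@Htri (x k) (x k.+1) (x (k.+2 %% n.+1)%N)) => //.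
      by rewrite -Hk1; apply: hj.
    by apply: hj; lia.
  have Hlen : ang_length w n c' <= ang_length w n.+1 c.
    rewrite /ang_length -(big_mkord xpredT (fun i => wt w (c' i))) -(big_mkord xpredT (fun i => wt w (c i))).
    rewrite (big_cat_nat _ (n:=k)) //=.
    rewrite [X in _ <= X](big_cat_nat _ (n:=k)) //=; last by lia.
    have E1 : \sum_(0<=i<k) wt w (c' i) = \sum_(0<=i<k) wt w (c i).
      by apply: eq_big_nat => i /andP[_ h]; rewrite /c' h.
    have E2 : \sum_(k<=i<n) wt w (c' i) = wt w d + \sum_(k.+2<=i<n.+1) wt w (c i).
      rewrite big_ltn // /c' ltnn eqxx; congr (_ + _).
      rewrite [RHS]big_add1 /=; apply: eq_big_nat => i /andP[h1 h2].
      have -> : (i < k)%N = false by lia.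
      by have -> : (i == k) = false by lia.
    have E3 : \sum_(k<=i<n.+1) wt w (c i) = wt w (c k) + (wt w (c k.+1) + \sum_(k.+2<=i<n.+1) wt w (c i)).
      rewrite [LHS]big_ltn; last lia.
      by rewrite [X in _ + X]big_ltn; last lia.
    rewrite E1 E2 E3; lra.
  have [H1|H2] := IH x' c' Hc; first by left; apply: le_trans H1 Hlen.
  right; move: H2; rewrite /bounds_lk_disk => H2.
  have Hg := @poly_tri_map (fun i j => exists c, lk_joins v c (x i) (x j))
     (fun i j => exists c, lk_joins v c (x' i) (x' j)) g.
  have Hmono : forall a b, (a < b)%N -> (g a < g b)%N.
    by move=> a b hab; rewrite /g; case: ifP => h1; case: ifP => h2; lia.
  have Hg' := Hg (fun a b H => H) Hmono _ _ H2.
  have [kl|ke] := ltnP k.+1 n.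
  + have Eg : g n.-1 = n by rewrite /g; case: ifP => h; lia.
    have HH : poly_tri (fun i j => exists c, lk_joins v c (x i) (x j)) (g 0%N) (g n.-1).
      apply: Hg' => a /andP [_ ha].
      have [Eak|Nak] := eqVneq a k.
        subst a; right.
        have E1 : g k = k by rewrite /g leqnn.
        have E2 : g k.+1 = k.+2 by rewrite /g; case: ifP => h; lia.
        rewrite E1 E2; split => //.
        exists d; have <- : (k.+2 %% n.+1 = k.+2)%N by rewrite modn_small; lia.
        done.
      by left; rewrite /g; case: ifP => h1; case: ifP => h2; lia.
    by rewrite Eg in HH; exact: HH.
  + have Ek : k = n.-1 by lia.
    have Eg : g n.-1 = n.-1 by rewrite /g; case: ifP => h; lia.
    have P : poly_tri (fun i j => exists c, lk_joins v c (x i) (x j)) (g 0%N) (g n.-1).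
      apply: Hg'.
      by move=> a /andP [_ ha]; left; rewrite /g; case: ifP => h1; case: ifP => h2; lia.
    rewrite Eg in P.
    have Hmod : (k.+2 %% n.+1 = 0)%N.
      rewrite Ek; have -> : n.-1.+2 = n.+1 by lia.
      by rewrite modnn.
    apply: (@PT_split _ 0 n.-1 n) => //; [lia|lia| | |].
    - by right; exists d; apply: joins_sym; rewrite -Hmod -Ek.
    - by left; lia.
    - have E : n = n.-1.+1 by lia.
      by rewrite [X in poly_tri _ _ X]E; exact: PT_side.
- (* k = n : remove vertex 0 *)
  have Ek : k = n by lia.
  subst k.
  have Hmod : (n.+2 %% n.+1 = 1)%N.
    have -> : n.+2 = (1 + n.+1)%N by lia.
    rewrite modnDr modn_small //; lia.
  rewrite Hmod in hd.
  pose x' i := x i.+1.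
  pose c' i := if (i < n.-1)%N then c i.+1 else d.
  have Hc : lk_cycle v n x' c'.
    split => //.
      by move=> a b ha hb /hinj; lia.
    move=> i hi; rewrite /c' /x'.
    have [ilt|ige] := ltnP i n.-1.
      have E2 : (i.+1 %% n)%N = i.+1 by rewrite modn_small; lia.
      have E3 : (i.+2 %% n.+1)%N = i.+2 by rewrite modn_small; lia.
      by rewrite E2 -E3; apply: hj; lia.
    have Ei : i = n.-1 by lia.
    have -> : i.+1 = n by lia.
    by rewrite modnn.
  have Hw : wt w d <= wt w (c n) + wt w (c 0%N).
    apply: (@Htri (x n) (x 0%N) (x 1%N)) => //.
      by have H0 := hj n (ltnSn _); rewrite modnn in H0.
    have H0 := hj 0%N (ltn0Sn _); rewrite modn_small in H0; [exact: H0|lia].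
  have Hlen : ang_length w n c' <= ang_length w n.+1 c.
    rewrite /ang_length -(big_mkord xpredT (fun i => wt w (c' i))) -(big_mkord xpredT (fun i => wt w (c i))).
    have En : n = n.-1.+1 by lia.
    have E1 : \sum_(0<=i<n) wt w (c' i) = \sum_(0<=i<n.-1) wt w (c i.+1) + wt w d.
      rewrite [in LHS]En big_nat_recr //= /c' ltnn; congr (_ + _).
      by apply: eq_big_nat => i /andP[_ h]; rewrite h.
    have E2 : \sum_(0<=i<n.+1) wt w (c i) = wt w (c 0%N) + (\sum_(0<=i<n.-1) wt w (c i.+1) + wt w (c n)).
      rewrite big_ltn // big_add1 /=; congr (_ + _).
      by rewrite [in LHS]En big_nat_recr //= -En.
    rewrite E1 E2; lra.
  have [H1|H2] := IH x' c' Hc; first by left; apply: le_trans H1 Hlen.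
  right; rewrite /bounds_lk_disk.
  have P := @poly_tri_map (fun i j => exists c, lk_joins v c (x i) (x j))
     (fun i j => exists c, lk_joins v c (x' i) (x' j)) S (fun a b H => H)
     (fun a b h => h) _ _ H2 (fun a _ => or_introl erefl).
  have -> : n.+1.-1 = n by [].
  have -> : n = n.-1.+1 by lia.
  apply: (@PT_split _ 0 1 n.-1.+1) => //; [lia|by left| |exact: PT_side].
  by right; exists d; apply: joins_sym; have <- : n = n.-1.+1 by lia.
Qed.

Theorem lemma2p5 (R : realType) (X : complex3) (w : tri X -> 'I_3 -> R)
  (v : vert X) (n : nat) (x : nat -> edge X) (c : nat -> corner X) :
  strictly_systolic w -> lk_cycle v n x c ->
  2 * pi <= ang_length w n c \/ bounds_lk_disk v n x.
Proof.
move=> [_ [[_ _ Htri] Hl _]].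
apply: main_ind; [exact: (Htri v)|exact: (Hl v)].
Qed.
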